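(* Consider the linear model $\mathbf{Y} \mid \boldsymbol{\beta},\sigma^2 \sim N_n(\mathbf{X}\boldsymbol{\beta}, \sigma^2 \mathbf{I}_n)$ with $\mathbf{X}\in\mathbb{R}^{n\times p}$ fixed, and the conjugate global-local prior $$\beta_j \mid \sigma^2,\tau^2,\lambda_j^2 \sim N(0, \sigma^2\tau^2\lambda_j^2)\ \text{independently},\ j=1,\dots,p, \qquad \pi(\sigma^2)\propto \sigma^{-2},$$ with arbitrary priors on $\tau^2$ and $\lambda_1^2,\dots,\lambda_p^2$. Under this model, the conditional posterior mean of $\sigma^2$ is $$\mathbb{E}[\sigma^2 \mid \mathbf{Y}, \boldsymbol{\beta}, \tau^2, \lambda_1^2,\dots,\lambda_p^2] = \frac{\lVert \mathbf{Y} - \mathbf{X}\boldsymbol{\beta}\rVert^2 + \sum_{j=1}^p \beta_j^2/(\lambda_j^2\tau^2)}{n+p-2}.$$ Let $\boldsymbol{\beta}^*$ denote the true vector of regression coefficients, with $\lVert \boldsymbol{\beta}^*\rVert_0 = q$ and $\max_j \beta_j^{*2} = M_1$ for some constant $M_1\in\mathbb{R}$. Let $\sigma^* = \lVert \mathbf{Y} - \mathbf{X}\boldsymbol{\beta}^*\rVert/\sqrt{n}$ be the oracle estimator and suppose $\sigma^* = O(1)$. Suppose also that for every $j\in\{1,\dots,p\}$ with $\beta^*_j \neq 0$ we have $\tau^2\lambda_j^2 > M_2$ for some constant $M_2 \in \mathbb{R}$ (with $M_2>0$). Then $$\mathbb{E}[\sigma^2 \mid \mathbf{Y}, \boldsymbol{\beta}^*,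 \tau^2, \lambda_1^2,\dots,\lambda_p^2] \leq \frac{n\sigma^{*2}}{n+p-2} + \frac{q M_1/M_2}{n+p-2}.$$ In particular, as $p/n\to\infty$ and $q/p\to 0$, $$\mathbb{E}[\sigma^2 \mid \mathbf{Y}, \boldsymbol{\beta}^*, \tau^2, \lambda_1^2,\dots,\lambda_p^2] = o(1).$$
   Context: $\lVert\cdot\rVert_0$ denotes the number of nonzero entries and $\lVert\cdot\rVert$ the Euclidean norm. The conditional posterior mean is evaluated at $\boldsymbol{\beta}=\boldsymbol{\beta}^*$; terms with $\beta^*_j=0$ contribute zero to the sum. It is assumed $n+p>2$. *)

(* Defs.v *)
From HB Require Import structures.
From mathcomp Require Import all_boot all_order all_algebra.
From mathcomp Require Import all_classical all_reals all_analysis.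
Set Implicit Arguments. Unset Strict Implicit. Unset Printing Implicit Defensive.
Import Order.TTheory GRing.Theory Num.Theory.
Local Open Scope ring_scope.

Definition sqnorm (R : numDomainType) (m : nat) (v : 'cV[R]_m) : R :=
  \sum_(i < m) v i 0 ^+ 2.

Definition l0norm (R : numDomainType) (p : nat) (beta : 'cV[R]_p) : nat :=
  #|[set j : 'I_p | beta j 0 != 0]|.

(* max_j beta_j^2 (0 when p = 0) *)
Definition maxsq (R : realDomainType) (p : nat) (beta : 'cV[R]_p) : R :=
  \big[Num.max/0]_(j < p) beta j 0 ^+ 2.

Definition oracle_sigma (R : rcfType) (n p : nat) (X : 'M[R]_(n, p))
  (Y : 'cV[R]_n) (beta : 'cV[R]_p) : R :=
  Num.sqrt (sqnorm (Y - X *m beta)) / Num.sqrt n%:R.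

(* Conditional posterior mean E[sigma^2 | Y, beta, tau^2, lambda^2] under the
   conjugate global-local model (inverse-gamma full conditional), as given in
   the statement; terms with beta_j = 0 contribute zero. *)
Definition cond_post_mean_sigma2 (R : realFieldType) (n p : nat)
  (X : 'M[R]_(n, p)) (Y : 'cV[R]_n) (beta : 'cV[R]_p) (tau2 : R)
  (lam2 : 'I_p -> R) : R :=
  (sqnorm (Y - X *m beta)
     + \sum_(j < p | beta j 0 != 0) beta j 0 ^+ 2 / (lam2 j * tau2))
  / ((n + p)%:R - 2).

(* Main.v *)
Require Import Defs.
From HB Require Import structures.
From mathcomp Require Import all_boot all_order all_algebra.
From mathcomp Require Import all_classical all_reals all_analysis.
From mathcomp Require Import lra.
Import Order.TTheory GRing.Theory Num.Theory.
Import numFieldNormedType.Exports.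
Local Open Scope classical_set_scope.
Local Open Scope ring_scope.

Lemma maxsq_ge (R : realDomainType) p (b : 'cV[R]_p) j : b j 0 ^+ 2 <= maxsq b.
Proof. by rewrite /maxsq (bigD1 j) //= le_max lexx. Qed.

Lemma maxsq_ge0 (R : realDomainType) p (b : 'cV[R]_p) : 0 <= maxsq b.
Proof.
rewrite /maxsq; elim/big_ind: _ => //=; last by move=> i _; rewrite sqr_ge0.
by move=> x y hx hy; rewrite le_max hx.
Qed.

Lemma sqnorm_ge0 (R : realDomainType) m (v : 'cV[R]_m) : 0 <= sqnorm v.
Proof. by apply: sumr_ge0 => i _; rewrite sqr_ge0. Qed.

Lemma n_oracle (R : realType) n p (X : 'M[R]_(n, p)) Y b :
  n%:R * oracle_sigma X Y b ^+ 2 = sqnorm (Y - X *m b).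
Proof.
case: n X Y => [|n] X Y.
  by rewrite mul0r /sqnorm big_ord0.
rewrite /oracle_sigma expr_div_n !sqr_sqrtr ?ler0n ?sqnorm_ge0 //.
by rewrite mulrC divfK // pnatr_eq0.
Qed.

Lemma sum_bound (R : realType) p (b : 'cV[R]_p) tau2 (lam2 : 'I_p -> R) M2 :
  0 < M2 -> (forall j, b j 0 != 0 -> M2 < tau2 * lam2 j) ->
  \sum_(j < p | b j 0 != 0) b j 0 ^+ 2 / (lam2 j * tau2)
    <= (l0norm b)%:R * maxsq b / M2.
Proof.
move=> M2p hM.
apply: (@le_trans _ _ (\sum_(j < p | b j 0 != 0) maxsq b / M2)).
  apply: ler_sum => j hj.
  have h1 := hM j hj.
  have lp : 0 < lam2 j * tau2 by rewrite mulrC; apply: lt_trans h1.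
  apply: (@le_trans _ _ (b j 0 ^+ 2 / M2)).
    apply: ler_wpM2l; first exact: sqr_ge0.
    by rewrite lef_pV2 // ?posrE // mulrC ltW.
  by apply: ler_wpM2r; [rewrite invr_ge0 ltW | exact: maxsq_ge].
rewrite (eq_bigl (fun j => j \in [set j : 'I_p | b j 0 != 0]%SET)); last first.
  by move=> j; rewrite !inE.
by rewrite sumr_const /l0norm mulr_natl mulrnAl.
Qed.

Lemma part1 (R : realType) :
  (forall (n p : nat) (X : 'M[R]_(n, p)) (Y : 'cV[R]_n) (betastar : 'cV[R]_p)
          (tau2 : R) (lam2 : 'I_p -> R) (M1 M2 : R),
      (2 < n + p)%N ->
      0 < tau2 -> (forall j, 0 < lam2 j) ->
      maxsq betastar = M1 ->
      0 < M2 ->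
      (forall j, betastar j 0 != 0 -> M2 < tau2 * lam2 j) ->
      cond_post_mean_sigma2 X Y betastar tau2 lam2
        <= n%:R * oracle_sigma X Y betastar ^+ 2 / ((n + p)%:R - 2)
           + (l0norm betastar)%:R * M1 / M2 / ((n + p)%:R - 2)).
Proof.
move=> n p X Y b tau2 lam2 M1 M2 hnp ht hl <- M2p hM.
have Dp : 0 < (n + p)%:R - 2 :> R.
  by rewrite subr_gt0; have : (2%:R < (n + p)%:R :> R) by rewrite ltr_nat.
rewrite /cond_post_mean_sigma2 n_oracle -mulrDl.
apply: ler_wpM2r; first by rewrite invr_ge0 ltW.
by rewrite lerD2l; apply: sum_bound.
Qed.

Lemma part2 (R : realType) :
  (forall (n p : nat -> nat) (X : forall k, 'M[R]_(n k, p k))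
          (Y : forall k, 'cV[R]_(n k)) (betastar : forall k, 'cV[R]_(p k))
          (tau2 : nat -> R) (lam2 : forall k, 'I_(p k) -> R) (M1 M2 : R),
      (forall k, (2 < n k + p k)%N) ->
      (forall k, 0 < tau2 k) -> (forall k j, 0 < lam2 k j) ->
      (forall k, maxsq (betastar k) = M1) ->
      0 < M2 ->
      (forall k j, betastar k j 0 != 0 -> M2 < tau2 k * lam2 k j) ->
      ((p k)%:R / (n k)%:R : R) @[k --> \oo] --> +oo ->
      ((l0norm (betastar k))%:R / (p k)%:R : R) @[k --> \oo] --> 0 ->
      (exists C : R, \forall k \near \oo,
          `|oracle_sigma (X k) (Y k) (betastar k)| <= C) ->
      cond_post_mean_sigma2 (X k) (Y k) (betastar k) (tau2 k) (lam2 k)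
        @[k --> \oo] --> 0).
Proof.
move=> n p X Y b tau2 lam2 M1 M2 hnp ht hl hM1 M2p hM hpn hq [C hC].
have M1ge : 0 <= M1 by rewrite -(hM1 0%N) maxsq_ge0.
have /cvgryPgt hpn2 := hpn.
have h0 : ((n k)%:R / (p k)%:R : R) @[k --> \oo] --> 0.
  apply/cvgr0Pnorm_lt => e e0.
  have := hpn2 e^-1; apply: filterS => k hk.
  have [->|nk0] := eqVneq (n k) 0%N; first by rewrite mul0r normr0.
  have nkp : 0 < (n k)%:R :> R by rewrite ltr0n lt0n.
  have pkp : 0 < (p k)%:R / (n k)%:R :> R.
    by apply: lt_trans hk; rewrite invr_gt0.
  rewrite ger0_norm ?divr_ge0 ?ler0n // -invf_div -[e]invrK ltf_pV2 ?posrE //.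
  by rewrite invr_gt0.
pose g k := C ^+ 2 * (2 * ((n k)%:R / (p k)%:R)) +
            M1 / M2 * (2 * ((l0norm (b k))%:R / (p k)%:R)).
apply: (@squeeze_cvgr _ _ _ _ (fun=> 0) g); last first.
- rewrite -[0](addr0 0).
  apply: cvgD.
    rewrite -[0](mulr0 (C ^+ 2)); apply: cvgM; first exact: cvg_cst.
    by rewrite -[0](mulr0 2); apply: cvgM; [exact: cvg_cst | exact: h0].
  rewrite -[0](mulr0 (M1 / M2)); apply: cvgM; first exact: cvg_cst.
  by rewrite -[0](mulr0 2); apply: cvgM; [exact: cvg_cst | exact: hq].
- exact: cvg_cst.
near=> k.
have hk2 : 2 < (p k)%:R / (n k)%:R :> R by near: k; exact: hpn2.
have hCk : `|oracle_sigma (X k) (Y k) (b k)| <= C by near: k; exact: hC.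
have [nk0|nk0] := eqVneq (n k) 0%N.
  have : (2 : R) < 0 by move: hk2; rewrite [(n k)%:R](_ : _ = 0 :> R) ?nk0 // invr0 mulr0.
  move=> h; exfalso; lra.
have Nge1 : 1 <= (n k)%:R :> R by rewrite ler1n lt0n.
have Np : 0 < (n k)%:R :> R by rewrite ltr0n lt0n.
have P2N : 2 * (n k)%:R < (p k)%:R :> R by rewrite -ltr_pdivlMr.
have Dp : 0 < (n k + p k)%:R - 2 :> R.
  by rewrite subr_gt0; have : (2%:R < (n k + p k)%:R :> R) by rewrite ltr_nat (hnp k).
have Pp : 0 < (p k)%:R :> R by lra.
have DE : (n k + p k)%:R - 2 = (n k)%:R + (p k)%:R - 2 :> R by rewrite natrD.
have iDP : ((n k + p k)%:R - 2)^-1 <= 2 * (p k)%:R^-1 :> R.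
  have -> : 2 * (p k)%:R^-1 = ((p k)%:R / 2)^-1 :> R by rewrite invf_div mulrC.
  rewrite lef_pV2 ?posrE ?divr_gt0 //; lra.
apply/andP; split.
  rewrite /cond_post_mean_sigma2 divr_ge0 ?(ltW Dp) // addr_ge0 ?sqnorm_ge0 //.
  apply: sumr_ge0 => j _; rewrite divr_ge0 ?sqr_ge0 // mulr_ge0 // ltW //.
apply: le_trans (@part1 R _ _ _ _ _ _ _ _ _ (hnp k) (ht k) (hl k) (hM1 k) M2p (hM k)) _.
rewrite /g.
set o := oracle_sigma _ _ _ in hCk *.
set N := (n k)%:R in Np Nge1 P2N iDP DE *.
set P := (p k)%:R in Pp P2N iDP DE *.
set q := (l0norm (b k))%:R.
set iD := (_ - 2)^-1 in iDP *.
have iDge : 0 <= iD by rewrite invr_ge0 ltW.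
have qge : 0 <= q by rewrite ler0n.
have o2 : o ^+ 2 <= C ^+ 2.
  have -> : o ^+ 2 = `|o| ^+ 2 by rewrite real_normK ?num_real.
  have := normr_ge0 o; nra.
have dP : 0 <= 2 / P - iD by rewrite subr_ge0.
have A1 : 0 <= N * iD * (C ^+ 2 - o ^+ 2).
  by apply: mulr_ge0; [apply: mulr_ge0; [apply: ltW|] | rewrite subr_ge0].
have A2 : 0 <= N * C ^+ 2 * (2 / P - iD).
  by apply: mulr_ge0 => //; apply: mulr_ge0; [apply: ltW | apply: sqr_ge0].
have m12 : 0 <= M1 / M2 by rewrite divr_ge0 // ltW.
have A3 : 0 <= q * (M1 / M2) * (2 / P - iD).
  by apply: mulr_ge0 => //; apply: mulr_ge0.
rewrite /=.
nra.
Unshelve. all: end_near.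
Qed.

Theorem proposition3 (R : realType) :
  (* finite-sample bound *)
  (forall (n p : nat) (X : 'M[R]_(n, p)) (Y : 'cV[R]_n) (betastar : 'cV[R]_p)
          (tau2 : R) (lam2 : 'I_p -> R) (M1 M2 : R),
      (2 < n + p)%N ->
      0 < tau2 -> (forall j, 0 < lam2 j) ->
      maxsq betastar = M1 ->
      0 < M2 ->
      (forall j, betastar j 0 != 0 -> M2 < tau2 * lam2 j) ->
      cond_post_mean_sigma2 X Y betastar tau2 lam2
        <= n%:R * oracle_sigma X Y betastar ^+ 2 / ((n + p)%:R - 2)
           + (l0norm betastar)%:R * M1 / M2 / ((n + p)%:R - 2))
  /\
  (* asymptotic consequence: p/n -> oo, q/p -> 0, sigma^* = O(1) *)
  (forall (n p : nat -> nat) (X : forall k, 'M[R]_(n k, p k))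
          (Y : forall k, 'cV[R]_(n k)) (betastar : forall k, 'cV[R]_(p k))
          (tau2 : nat -> R) (lam2 : forall k, 'I_(p k) -> R) (M1 M2 : R),
      (forall k, (2 < n k + p k)%N) ->
      (forall k, 0 < tau2 k) -> (forall k j, 0 < lam2 k j) ->
      (forall k, maxsq (betastar k) = M1) ->
      0 < M2 ->
      (forall k j, betastar k j 0 != 0 -> M2 < tau2 k * lam2 k j) ->
      ((p k)%:R / (n k)%:R : R) @[k --> \oo] --> +oo ->
      ((l0norm (betastar k))%:R / (p k)%:R : R) @[k --> \oo] --> 0 ->
      (exists C : R, \forall k \near \oo,
          `|oracle_sigma (X k) (Y k) (betastar k)| <= C) ->
      cond_post_mean_sigma2 (X k) (Y k) (betastar k) (tau2 k) (lam2 k)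
        @[k --> \oo] --> 0).
Proof. split; [exact: part1 | exact: part2]. Qed.
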